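(* Assume $2c<\gamma<a-c$ and additionally $\gamma>\frac a2+c$. Then the unique maximizer $p^*_\gamma$ of $r_\gamma$ on $[0,a/b]$ (the unique zero of $r_\gamma'$ in $(0,a/b)$) equals $\frac{a}{2b}$. Moreover, let $\alpha,\beta\ge0$ and let $\hat a,\hat b$ be real numbers with $\hat b\ge b_{\min}$, $|\hat a-a|\le\alpha$, $|\hat b-b|\le\beta$ and $\frac{\hat a}{2\hat b}\in[0,a/b]$. Then $$r_\gamma\Bigl(\frac a{2b}\Bigr)-r_\gamma\Bigl(\frac{\hat a}{2\hat b}\Bigr)\le 2C_s\Bigl(\frac{a_{\max}^2\beta^2}{4b_{\min}^4}+\frac{\alpha^2}{4b_{\min}^2}\Bigr),$$ where $C_s:=\frac{2b+abL_F}{2}$.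
   Context: Let $a,b,c,L_F>0$ and constants $a_{\max},b_{\min}>0$ with $a\le a_{\max}$, $b\ge b_{\min}$. Let $N$ be a real random variable taking values in $[-c,c]$ with $\mathbb{E}[N]=0$, whose cumulative distribution function $F$ is $L_F$-Lipschitz. For an inventory level $\gamma$ and price $p\ge0$, the expected revenue is $r_\gamma(p):=p\cdot\mathbb{E}_N\bigl[\min\{\gamma,\,a-bp+N\}\bigr]$, and $r_\gamma'$ denotes its derivative in $p$. *)

(* Defs.v *)
From mathcomp Require Import all_boot all_order all_algebra.
From mathcomp Require Import all_classical all_reals all_analysis.
Set Implicit Arguments. Unset Strict Implicit. Unset Printing Implicit Defensive.
Import Order.TTheory GRing.Theory Num.Theory.
Local Open Scope ring_scope.

Definition revenue d (T : measurableType d) (R : realType) (P : probability T R)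
  (N : {RV P >-> R}) (a b gamma p : R) : R :=
  p * fine ('E_P[fun t => (Num.min gamma (a - b * p + N t))%R])%E.

Definition cdfR d (T : measurableType d) (R : realType) (P : probability T R)
  (N : {RV P >-> R}) (x : R) : R := fine (cdf N x).

(* Main.v *)
Require Import Defs.
From mathcomp Require Import all_boot all_order all_algebra.
From mathcomp Require Import all_classical all_reals all_analysis.
From mathcomp Require Import ring lra.
Import Order.TTheory GRing.Theory Num.Theory.
Local Open Scope classical_set_scope.
Local Open Scope ring_scope.

Section helpers.
Context d (T : measurableType d) (R : realType) (P : probability T R).

Lemma lfun_bdd (f : T -> R) (B : R) : measurable_fun setT f ->
  (forall x, `|f x| <= B) -> f \in Lfun P 1.
Proof.
move=> mf fB; apply/Lfun1_integrable.
apply: measurable_bounded_integrable => //.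
  by apply: le_lt_trans (probability_le1 P measurableT) _; rewrite ltry.
rewrite /bounded_near; exists B; split; first exact: num_real.
move=> M /ltW BM x _ /=; exact: le_trans (fB x) BM.
Qed.

Definition ER (f : T -> R) : R := fine ('E_P[f])%E.
Arguments ER : clear implicits.

Lemma ER_D f g : f \in Lfun P 1 -> g \in Lfun P 1 -> ER (f \+ g) = ER f + ER g.
Proof.
move=> lf lg; rewrite /ER expectationD // fineD //; exact: expectation_fin_num.
Qed.

Lemma ER_cst k : ER (cst k) = k.
Proof. by rewrite /ER expectation_cst. Qed.

Lemma ER_Z f k : f \in Lfun P 1 -> ER (k \o* f) = k * ER f.
Proof.
move=> lf; rewrite /ER expectationZl //.
have := expectation_fin_num lf; case: ('E_P[f])%E => //.
Qed.

Lemma ER_indic A : measurable A -> ER (\1_A) = fine (P A).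
Proof. by move=> mA; rewrite /ER expectation_indic. Qed.

Lemma ER_le f g : f \in Lfun P 1 -> g \in Lfun P 1 -> (forall x, f x <= g x) ->
  ER f <= ER g.
Proof.
move=> lf lg fg; rewrite /ER; apply: fine_le; try exact: expectation_fin_num.
rewrite !unlock; apply: le_integral => //; try exact/Lfun1_integrable.
by move=> x _; rewrite lee_fin.
Qed.

End helpers.
Arguments ER {d T R} P f.

Section Nlemmas.
Context d (T : measurableType d) (R : realType) (P : probability T R).
Variables (N : {RV P >-> R}) (c : R).
Hypothesis Nb : forall t, -c <= N t <= c.
Hypothesis EN : ('E_P[N] = 0)%E.

Lemma mN : measurable_fun setT (N : T -> R).
Proof. exact: measurable_funP. Qed.

Lemma lN : (N : T -> R) \in Lfun P 1.
Proof. apply: (@lfun_bdd _ _ _ _ _ c mN) => x; rewrite ler_norml; exact: Nb. Qed.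

Lemma ERN : ER P N = 0.
Proof. by rewrite /ER EN. Qed.

Lemma mA t : measurable [set x | N x <= t].
Proof.
have := measurable_fun_le measurableT mN (measurable_cst t); rewrite setTI.
by [].
Qed.

Lemma cdfRE t : cdfR N t = fine (P [set x | N x <= t]).
Proof.
rewrite /cdfR /cdf /distribution /pushforward; by congr (fine (P _)).
Qed.

Lemma cdfRc : cdfR N c = 1.
Proof.
rewrite cdfRE (_ : [set x | N x <= c] = setT) ?probability_setT //.
by apply/seteqP; split => x //= _; case/andP: (Nb x).
Qed.


Variable g : R.
Definition M k := fun x => Num.min g (k + N x).

Lemma mkN k : measurable_fun setT (fun x => k + N x).
Proof. exact: (measurable_realfun.measurable_funD (measurable_cst k) mN). Qed.

Lemma lkN k : (fun x => k + N x) \in Lfun P 1.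
Proof.
apply: (@lfun_bdd _ _ _ _ _ (`|k| + c) (mkN k)) => x.
apply: le_trans (ler_normD _ _) _; rewrite lerD2l ler_norml; exact: Nb.
Qed.

Lemma lM k : M k \in Lfun P 1.
Proof.
apply: (@lfun_bdd _ _ _ _ _ (`|g| + (`|k| + c))).
  exact: measurable_realfun.measurable_minr (measurable_cst g) (mkN k).
move=> x; have /andP[h1 h2] := Nb x.
have c0 : 0 <= c by lra.
have hk := normr_ge0 k; have hg := normr_ge0 g.
have hN : `|N x| <= c by rewrite ler_norml h1 h2.
rewrite /M minEle; case: ifP => _; first lra.
apply: le_trans (ler_normD _ _) _; lra.
Qed.

Lemma ERkN k : ER P (fun x => k + N x) = k.
Proof.
rewrite (_ : (fun x => k + N x) = cst k \+ N) // ER_D ?ER_cst ?ERN ?addr0 //.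
  exact: Lfun_cst.
exact: lN.
Qed.

Lemma ERM_le k : ER P (M k) <= k.
Proof.
rewrite -{2}(ERkN k); apply: ER_le; [exact: lM | exact: lkN|].
by move=> x; rewrite /M ge_min lexx orbT.
Qed.

Lemma ERM_eq k : k + c <= g -> ER P (M k) = k.
Proof.
move=> kg; rewrite -{2}(ERkN k); congr (ER P _); apply/funext => x.
have /andP[h1 h2] := Nb x.
rewrite /M minEle; case: leP => h //; lra.
Qed.

Lemma ERM_ge k : g - k <= c ->
  k - (c - (g - k)) * (1 - cdfR N (g - k)) <= ER P (M k).
Proof.
move=> tc; set t := g - k; set A := [set x | N x <= t].
have mAt : measurable A by exact: mA.
have l1 : (\1_A : T -> R) \in Lfun P 1.
  apply: (@lfun_bdd _ _ _ _ _ 1 (@measurable_realfun.measurable_indic _ _ R setT A mAt)) => x.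
  by rewrite (@indicE _ R A x); case: (x \in A); rewrite /= ?normr1 ?normr0.
have lZ : ((c - t) \o* \1_A : T -> R) \in Lfun P 1.
  apply: (@lfun_bdd _ _ _ _ _ `|c - t|).
    apply: measurable_realfun.measurable_funM; last exact: measurable_cst.
    exact: (@measurable_realfun.measurable_indic _ _ R setT A mAt).
  move=> x /=; rewrite (@indicE _ R A x) normrM; case: (x \in A);
    by rewrite /= ?normr1 ?normr0 ?mul1r ?mul0r.
set Y := (fun x => (k - (c - t)) + N x) \+ ((c - t) \o* \1_A).
have EY : ER P Y = k - (c - t) * (1 - cdfR N t).
  rewrite /Y ER_D ?ERkN ?ER_Z ?ER_indic -?cdfRE //; last exact: lkN.
  by ring.
rewrite -EY; apply: ER_le; [exact: (rpredD (lkN _) lZ) | exact: lM |].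
move=> x; rewrite /Y /M /= indicE le_min.
case: (boolP (x \in A)) => xA.
  move: xA; rewrite inE /A /= => xA.
  rewrite mul1r /t; rewrite /t in xA; apply/andP; split; lra.
have /andP[h1 h2] := Nb x.
rewrite /= mul0r addr0 /t; apply/andP; split; lra.
Qed.

End Nlemmas.

Lemma div_mono (R : realFieldType) (A B w y : R) :
  0 <= A -> A <= B -> 0 < w -> w <= y -> A / y <= B / w.
Proof.
move=> A0 AB w0 wy; have y0 : 0 < y by exact: lt_le_trans w0 wy.
apply: ler_pM => //; first by rewrite invr_ge0 ltW.
by rewrite lef_pV2 // posrE.
Qed.

Theorem mainTheorem4 (R : realType) (d : measure_display) (T : measurableType d)
  (P : probability T R) (N : {RV P >-> R})
  (a b c LF amax bmin gamma : R) :
  0 < a -> 0 < b -> 0 < c -> 0 < LF -> 0 < amax -> 0 < bmin ->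
  a <= amax -> bmin <= b ->
  (forall t, -c <= N t <= c) ->
  ('E_P[N] = 0)%E ->
  (forall x y, `|cdfR N x - cdfR N y| <= LF * `|x - y|) ->
  2 * c < gamma -> gamma < a - c -> a / 2 + c < gamma ->
  let r := revenue N a b gamma in
  let Cs := (2 * b + a * b * LF) / 2 in
  (* a/(2b) is the unique maximizer of r on [0, a/b] *)
  ((0 <= a / (2 * b) <= a / b) /\
   (forall p, 0 <= p <= a / b -> r p <= r (a / (2 * b))) /\
   (forall p, 0 <= p <= a / b -> r p = r (a / (2 * b)) -> p = a / (2 * b))) /\
  (* estimation-error bound *)
  (forall alpha beta ahat bhat : R, 0 <= alpha -> 0 <= beta ->
     bmin <= bhat -> `|ahat - a| <= alpha -> `|bhat - b| <= beta ->
     0 <= ahat / (2 * bhat) <= a / b ->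
     r (a / (2 * b)) - r (ahat / (2 * bhat)) <=
       2 * Cs * (amax ^+ 2 * beta ^+ 2 / (4 * bmin ^+ 4)
                 + alpha ^+ 2 / (4 * bmin ^+ 2))).
Proof.
move=> a0 b0 c0 LF0 am0 bm0 aam bmb Nb EN FL g2c gac gac2 r Cs.
have rE : forall p, r p = p * ER P (M _ _ _ P N gamma (a - b * p)) by [].
have bn0 : b != 0 by rewrite gt_eqF.
set ps := a / (2 * b).
have aps : a = 2 * b * ps by rewrite /ps; field.
have abb : a / b = 2 * ps by rewrite /ps; field.
have ps0 : 0 < ps by rewrite /ps divr_gt0 // mulr_gt0.
have hU : forall p, 0 <= p -> r p <= p * (a - b * p).
  move=> p p0; rewrite rE; apply: ler_wpM2l => //; exact: (@ERM_le _ _ _ _ _ _ Nb EN).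
have hps : r ps = ps * (a - b * ps).
  rewrite rE (@ERM_eq _ _ _ _ _ _ Nb EN) //; rewrite {1}aps; lra.
have key : forall p, ps * (a - b * ps) - p * (a - b * p) = b * (p - ps) ^+ 2.
  by move=> p; rewrite aps; ring.
have sq0 : forall x : R, 0 <= b * x ^+ 2 by move=> x; rewrite mulr_ge0 ?sqr_ge0 ?ltW.
split; [split; [|split]|].
- rewrite abb; apply/andP; split; lra.
- move=> p /andP[p0 _]; rewrite hps; apply: le_trans (hU p p0) _.
  have := key p; have := sq0 (p - ps); lra.
- move=> p /andP[p0 _] rp.
  have h1 : b * (p - ps) ^+ 2 <= 0 by have := hU p p0; have := key p; lra.
  have h2 : (p - ps) ^+ 2 = 0.
    apply/eqP; rewrite eq_le sqr_ge0 andbT.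
    by rewrite -(pmulr_rle0 _ b0).
  by move/eqP: h2; rewrite sqrf_eq0 subr_eq0 => /eqP.
move=> alpha beta ahat bhat al0 be0 bmbh ha hb /andP[q0 qab].
set q := ahat / (2 * bhat).
have bh0 : 0 < bhat by exact: lt_le_trans bm0 bmbh.
have bhn0 : bhat != 0 by rewrite gt_eqF.
have Cs_ge : b <= Cs.
  rewrite /Cs; have : 0 <= a * b * LF by rewrite !mulr_ge0 // ltW.
  lra.
have K : r ps - r q <= Cs * (q - ps) ^+ 2.
  case: (lerP (a - b * q + c) gamma) => hq.
    rewrite hps rE (@ERM_eq _ _ _ _ _ _ Nb EN) //.
    have : b * (q - ps) ^+ 2 <= Cs * (q - ps) ^+ 2 by apply: ler_wpM2r; rewrite ?sqr_ge0.
    have := key q; lra.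
  set k := a - b * q.
  set u := c - (gamma - k).
  have u0 : 0 < u by rewrite /u /k; lra.
  have uq : u < b * (ps - q) by rewrite /u /k; rewrite {1}aps in hq gac2 *; lra.
  have qps : q <= ps.
    have : 0 < b * (ps - q) by lra.
    by rewrite pmulr_rgt0 // subr_gt0 => /ltW.
  have F1 : 1 - cdfR N (gamma - k) <= LF * u.
    rewrite -(@cdfRc _ _ _ _ _ _ Nb); apply: le_trans (ler_norm _) _.
    apply: le_trans (FL _ _) _; rewrite ger0_norm // ltW //.
  have E1 : k - LF * u ^+ 2 <= ER P (M _ _ _ P N gamma k).
    have gk : gamma - k <= c by rewrite /k; lra.
    have := @ERM_ge _ _ _ _ _ _ Nb EN gamma k gk; rewrite -/u.
    have : u * (1 - cdfR N (gamma - k)) <= u * (LF * u).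
      by rewrite ler_pM2l.
    rewrite expr2; lra.
  have E2 : u ^+ 2 <= b ^+ 2 * (ps - q) ^+ 2.
    rewrite -exprMn; have := ltW uq; nra.
  rewrite hps rE -/k.
  have E3 : q * (k - LF * u ^+ 2) <= q * ER P (M _ _ _ P N gamma k) by apply: ler_wpM2l.
  have E4 : q * LF * u ^+ 2 <= ps * LF * (b ^+ 2 * (ps - q) ^+ 2).
    apply: ler_pM => //; [by rewrite mulr_ge0 // ltW | exact: sqr_ge0 | by rewrite ler_pM2r].
  have E5 : ps * LF * (b ^+ 2 * (ps - q) ^+ 2) = a * b * LF / 2 * (q - ps) ^+ 2.
    by rewrite aps; field.
  have := key q; rewrite -/k /Cs.
  have E6 : (2 * b + a * b * LF) / 2 * (q - ps) ^+ 2 = b * (q - ps) ^+ 2 + a * b * LF / 2 * (q - ps) ^+ 2.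
    by field.
  rewrite E6; lra.
set X := amax ^+ 2 * beta ^+ 2 / (4 * bmin ^+ 4) + alpha ^+ 2 / (4 * bmin ^+ 2).
set u1 := (ahat - a) / (2 * bhat).
set v1 := a * (b - bhat) / (2 * b * bhat).
have quv : q - ps = u1 + v1.
  by rewrite /q /ps /u1 /v1; field; rewrite bhn0 bn0.
have hu1 : u1 ^+ 2 <= alpha ^+ 2 / (4 * bmin ^+ 2).
  have -> : u1 ^+ 2 = (ahat - a) ^+ 2 / (4 * bhat ^+ 2) by rewrite /u1; field; rewrite ?bhn0 ?bn0.
  apply: div_mono; rewrite ?sqr_ge0 ?mulr_gt0 ?exprn_gt0 //.
    have ha0 := normr_ge0 (ahat - a).
    by rewrite -(real_normK (num_real (ahat - a))) !expr2; nra.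
  by rewrite !expr2; nra.
have hv1 : v1 ^+ 2 <= amax ^+ 2 * beta ^+ 2 / (4 * bmin ^+ 4).
  have -> : v1 ^+ 2 = a ^+ 2 * (b - bhat) ^+ 2 / (4 * (b ^+ 2 * bhat ^+ 2)).
    by rewrite /v1; field; rewrite ?bhn0 ?bn0.
  apply: div_mono.
  - by rewrite mulr_ge0 // sqr_ge0.
  - have hb0 := normr_ge0 (bhat - b).
    have e1 : (b - bhat) ^+ 2 <= beta ^+ 2.
      rewrite -(real_normK (num_real (b - bhat))) distrC !expr2; nra.
    have e2 : a ^+ 2 <= amax ^+ 2 by rewrite !expr2; nra.
    apply: ler_pM => //; exact: sqr_ge0.
  - by rewrite mulr_gt0 // exprn_gt0.
  have h1 : bmin ^+ 2 <= b ^+ 2 by rewrite !expr2; nra.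
  have h2 : bmin ^+ 2 <= bhat ^+ 2 by rewrite !expr2; nra.
  have h3 : bmin ^+ 4 = bmin ^+ 2 * bmin ^+ 2 by rewrite -exprD.
  have h4 := sqr_ge0 bmin.
  rewrite h3; nra.
have D2 : (q - ps) ^+ 2 <= 2 * X.
  rewrite quv /X; have := sqr_ge0 (u1 - v1).
  rewrite !expr2 in hu1 hv1 *; lra.
apply: le_trans K _.
have Cs0 : 0 <= Cs by apply: le_trans Cs_ge; rewrite ltW.
have h := ler_wpM2l Cs0 D2; apply: (le_trans h); rewrite le_eqVlt; apply/orP; left; apply/eqP; ring.
Qed.
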